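(* Let $m\ge 1$, $N=2^m$, let $\mathcal{A}\subseteq[0,N-1]$ with complement $\mathcal{A}^c=[0,N-1]\setminus\mathcal{A}$, and let $\mathbf{P}\in\mathbb{F}_2^{N\times N}$ be upper triangular with all diagonal entries equal to $1$. Then $$\mathcal{C}_{\mathbf{P}\boldsymbol{G}_N}(\mathcal{A})^{\perp}=\mathcal{C}_{(\mathbf{P}^{t})^{-1}\mathbf{Q}_{\pi}\boldsymbol{G}_N\mathbf{Q}_{\pi}}(\mathcal{A}^c).$$
   Context: $[\ell,u]=\{\ell,\dots,u\}$. $\boldsymbol{G}_N=\begin{pmatrix}1&0\\1&1\end{pmatrix}^{\otimes m}$ over $\mathbb{F}_2$, rows and columns indexed by $0,\dots,N-1$. For $\mathbf{B}\in\mathbb{F}_2^{N\times N}$ and $\mathcal{S}\subseteq[0,N-1]$, $\mathcal{C}_{\mathbf{B}}(\mathcal{S})$ is the binary linear code spanned by the rows of $\mathbf{B}$ indexed by $\mathcal{S}$. $\mathbf{Q}_{\pi}$ is the permutation matrix of the permutation of $[0,N-1]$ swapping $i$ and $N-1-i$. $\perp$ denotes the dual code for the standard inner product over $\mathbb{F}_2$. *)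

(* Defs.v *)
From mathcomp Require Import all_boot all_order all_algebra all_fingroup.
Set Implicit Arguments. Unset Strict Implicit. Unset Printing Implicit Defensive.
Import GRing.Theory.
Local Open Scope ring_scope.

(* The 2x2 kernel F = [[1,0],[1,1]] over F_2, indexed by bits. *)
Definition polar_kernel : 'M['F_2]_2 :=
  \matrix_(a < 2, b < 2) (if (a == 0 :> nat) && (b == 1 :> nat) then 0 else 1).

Definition bit (k i : nat) : 'I_2 := inord (odd (i %/ 2 ^ k)).

(* G_N = F^{(x) m}, N = 2^m: entrywise, the Kronecker power is the product
   over all m binary digits of the kernel entries. *)
Definition GN (m : nat) : 'M['F_2]_(2 ^ m) :=
  \matrix_(i, j) \prod_(k < m) polar_kernel (bit k i) (bit k j).

Definition Qpi (n : nat) : 'M['F_2]_n := perm_mx (perm (@rev_ord_inj n)).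

(* C_B(S): the binary linear code spanned by the rows of B indexed by S,
   represented by a matrix whose row space is that code. *)
Definition code_gen (n : nat) (B : 'M['F_2]_n) (S : {set 'I_n}) : 'M['F_2]_n :=
  \matrix_(i, j) (if i \in S then B i j else 0).

Definition in_code (n : nat) (B : 'M['F_2]_n) (S : {set 'I_n}) (v : 'rV['F_2]_n) : bool :=
  (v <= code_gen B S)%MS.

Definition in_dual_code (n : nat) (B : 'M['F_2]_n) (S : {set 'I_n}) (v : 'rV['F_2]_n) : Prop :=
  forall c : 'rV['F_2]_n, in_code B S c -> (c *m v^T) 0 0 = 0.

Definition upper_unitriangular (n : nat) (P : 'M['F_2]_n) : Prop :=
  (forall i j : 'I_n, (j < i)%N -> P i j = 0) /\ (forall i : 'I_n, P i i = 1).

(* Main.v *)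
Require Import Defs.
From mathcomp Require Import all_boot all_order all_algebra all_fingroup.
From mathcomp Require Import zify.
Set Implicit Arguments. Unset Strict Implicit. Unset Printing Implicit Defensive.
Import GRing.Theory.
Local Open Scope ring_scope.

Lemma bits_inj m (a b : nat) : (a < 2^m)%N -> (b < 2^m)%N ->
  (forall k, (k < m)%N -> odd (a %/ 2^k) = odd (b %/ 2^k)) -> a = b.
Proof.
elim: m a b => [|m IH] a b ha hb h.
  by move: ha hb; rewrite expn0 !ltnS !leqn0 => /eqP-> /eqP->.
rewrite -(odd_double_half a) -(odd_double_half b).
have h0 := h 0%N isT; rewrite expn0 !divn1 in h0; rewrite h0.
congr (_ + _.*2)%N; rewrite -!divn2; apply: IH.
- by rewrite ltn_divLR // -expnSr.
- by rewrite ltn_divLR // -expnSr.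
move=> k hk; rewrite -!divnMA -expnS; exact: h.
Qed.

Lemma bit_rev m k i : (k < m)%N -> (i < 2^m)%N ->
  odd ((2^m - i.+1) %/ 2^k) = ~~ odd (i %/ 2^k).
Proof.
move=> hk hi.
have hX : (0 < 2^k)%N := expn_gt0 _ _.
have hXY : (2^m = 2^(m-k) * 2^k)%N by rewrite -expnD subnK // ltnW.
have he := divn_eq i (2^k).
have hr := ltn_pmod i hX.
have hY : odd (2^(m-k)) = false by rewrite oddX orbF subn_eq0; apply/negbTE; rewrite -ltnNge.
move: he hr hY; rewrite hXY in hi *.
set q := (i %/ 2^k)%N; set r := (i %% 2^k)%N; set X := (2^k)%N; set Y := (2^(m-k))%N.
move=> he hr hY.
have hq : (q < Y)%N by nia.
have -> : (Y * X - i.+1 = (Y - q.+1) * X + (X - r.+1))%N.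
  rewrite he. have : (q.+1 <= Y)%N by []. move=> /subnK H. nia.
rewrite divnMDl // divn_small ?addn0; last by lia.
rewrite oddB // hY /=. by case: (odd q).
Qed.
Definition pk (a b : bool) : 'F_2 := if ~~ a && b then 0 else 1.

Lemma GNE m (i j : 'I_(2^m)) :
  GN m i j = \prod_(k < m) pk (odd (i %/ 2^k)) (odd (j %/ 2^k)).
Proof.
rewrite mxE; apply: eq_bigr => k _; rewrite /bit /pk.
by case: odd; case: odd; rewrite mxE ?inordK.
Qed.

Lemma sum_pk (a c : bool) :
  pk a true * pk (~~ c) false + pk a false * pk (~~ c) true = (a == c)%:R.
Proof. by case: a; case: c; rewrite /pk /= ?mulr1 ?mul1r ?mulr0 ?mul0r ?addr0 ?add0r //; apply/val_inj. Qed.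

Lemma QAQ n (A : 'M['F_2]_n) i j : (Qpi n *m A *m Qpi n) i j = A (rev_ord i) (rev_ord j).
Proof.
rewrite /Qpi -row_permE.
have -> : perm_mx (perm (@rev_ord_inj n)) = perm_mx ((perm (@rev_ord_inj n))^-1)^-1 by rewrite invgK.
rewrite -col_permE !mxE permE; congr (A _ _).
apply: (@perm_inj _ (perm (@rev_ord_inj n))).
by rewrite permKV permE rev_ordK.
Qed.

Lemma GG m : GN m *m (Qpi (2^m) *m GN m *m Qpi (2^m))^T = 1%:M.
Proof.
apply/matrixP => i j; rewrite [in RHS]mxE mxE.
rewrite [LHS](eq_bigr (fun l => GN m i l * GN m (rev_ord j) (rev_ord l))); last first.
  by move=> l _; rewrite [X in _ * X]mxE QAQ.
under eq_bigr => l _ do rewrite !GNE.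
set f : 'I_(2^m) -> {ffun 'I_m -> bool} := fun l => [ffun k : 'I_m => odd (l %/ 2^k)].
have finj : injective f.
  move=> a b /ffunP h; apply/val_inj/(@bits_inj m); [exact: ltn_ord|exact: ltn_ord|] => k hk.
  by have := h (Ordinal hk); rewrite !ffunE.
have fbij : bijective f.
  by apply: (inj_card_bij finj); rewrite card_ffun card_bool !card_ord.
have [g fK gK] := fbij.
have gbij : bijective g by exists f.
rewrite (reindex g (onW_bij _ gbij)) /=.
have bitg fn (k : 'I_m) : odd (g fn %/ 2^k) = fn k.
  by have := congr1 (fun h : {ffun 'I_m -> bool} => h k) (gK fn); rewrite /f ffunE.
have brev (a : 'I_(2^m)) (k : 'I_m) : odd (rev_ord a %/ 2^k) = ~~ odd (a %/ 2^k).
  exact: bit_rev.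
under eq_bigr => fn _.
  rewrite -big_split /=.
  under eq_bigr => k _ do rewrite !brev bitg.
  over.
rewrite -(bigA_distr_bigA (fun (k : 'I_m) (b : bool) =>
   pk (odd (i %/ 2 ^ k)) b * pk (~~ odd (j %/ 2 ^ k)) (~~ b))) /=.
under eq_bigr => k _ do rewrite big_bool /= sum_pk.
case: (eqVneq i j) => [<-|hij].
  by rewrite big1 // => k _; rewrite eqxx.
have [k hk] : exists k : 'I_m, odd (i %/ 2^k) != odd (j %/ 2^k).
  apply/existsP; apply: contraR hij; rewrite negb_exists => /forallP h.
  apply/eqP/val_inj/(@bits_inj m); [exact: ltn_ord|exact: ltn_ord|] => k hk.
  by have := h (Ordinal hk); rewrite negbK => /eqP.
by rewrite (bigD1 k) //= (negbTE hk) mul0r.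
Qed.
Definition dS n (S : {set 'I_n}) : 'M['F_2]_n := diag_mx (\row_i ((i \in S)%:R)).

Lemma code_genE n (B : 'M['F_2]_n) S : code_gen B S = dS S *m B.
Proof.
apply/matrixP => i j; rewrite /dS mul_diag_mx !mxE.
by case: (i \in S); rewrite ?mul1r ?mul0r.
Qed.

Lemma dS_orth n (S : {set 'I_n}) : dS S *m dS (~: S) = 0.
Proof.
apply/matrixP => i j; rewrite /dS mulmx_diag !mxE in_setC.
by case: (i \in S); case: (i == j); rewrite /= ?mul1r ?mul0r ?mulr0.
Qed.

Lemma dS_add n (S : {set 'I_n}) : dS S + dS (~: S) = 1%:M.
Proof.
apply/matrixP => i j; rewrite /dS !mxE in_setC.
by case: (i \in S); case: (i == j); rewrite /= ?mulr1 ?mulr0 ?addr0 ?add0r.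
Qed.

Lemma dual_gen n (M W : 'M['F_2]_n) S (v : 'rV['F_2]_n) : M *m W^T = 1%:M ->
  (forall c : 'rV['F_2]_n, (c <= code_gen M S)%MS -> (c *m v^T) 0 0 = 0) <->
  (v <= code_gen W (~: S))%MS.
Proof.
move=> hMW; have hWM : W^T *m M = 1%:M by apply: mulmx1C.
have hMtW : M^T *m W = 1%:M by rewrite -[W]trmxK -trmx_mul hWM trmx1.
rewrite !code_genE; split.
- move=> h; set x := v *m M^T.
  have hv : v = x *m W by rewrite /x -mulmxA hMtW mulmx1.
  have hx0 : x *m dS S = 0.
    apply/matrixP => a i; rewrite /dS mul_mx_diag !mxE (ord1 a).
    case hi: (i \in S); rewrite ?mulr0 // mulr1.
    have := h (delta_mx 0 i *m (dS S *m M)) (submxMl _ _).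
    rewrite -rowE. 
    have -> : row i (dS S *m M) = row i M.
      by apply/rowP => j; rewrite /dS mul_diag_mx !mxE hi mul1r.
    rewrite !mxE => H; apply: (etrans _ H); apply: eq_bigr => l _; by rewrite !mxE mulrC.
  have -> : v = x *m (dS (~: S) *m W).
    by rewrite mulmxA -[x *m dS _]add0r -hx0 -mulmxDr dS_add mulmx1.
  exact: submxMl.
- case/submxP => y ->{v} c /submxP [x ->].
  rewrite !trmx_mul tr_diag_mx.
  have -> : x *m (dS S *m M) *m ((W^T *m diag_mx (\row_i ((i \in ~: S)%:R))) *m y^T)
    = x *m (dS S *m (M *m W^T) *m dS (~: S)) *m y^T by rewrite !mulmxA.
  by rewrite hMW mulmx1 dS_orth mulmx0 mul0mx mxE.
Qed.

Theorem corollary2 (m : nat) (hm : (1 <= m)%N) (A : {set 'I_(2 ^ m)})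
    (P : 'M['F_2]_(2 ^ m)) (hP : upper_unitriangular P) :
  forall v : 'rV['F_2]_(2 ^ m),
    in_dual_code (P *m GN m) A v <->
    in_code (invmx P^T *m Qpi (2 ^ m) *m GN m *m Qpi (2 ^ m)) (~: A) v.
Proof.
move=> v; rewrite /in_dual_code /in_code; apply: dual_gen.
have Pu : P \in unitmx.
  rewrite unitmxE -det_tr det_trig.
    by rewrite big1 ?unitr1 // => i _; rewrite mxE (proj2 hP).
  apply/forallP => i; apply/forallP => j; apply/implyP => hij.
  by rewrite mxE (proj1 hP).
have -> : invmx P^T *m Qpi (2 ^ m) *m GN m *m Qpi (2 ^ m)
   = invmx P^T *m (Qpi (2 ^ m) *m GN m *m Qpi (2 ^ m)) by rewrite !mulmxA.
by rewrite trmx_mul trmx_inv trmxK mulmxA -(mulmxA P) GG mulmx1 mulmxV.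
Qed.
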